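(* Let $K,N\ge 1$, $T\ge1$, let $c_1^M,\dots,c_K^M>0$ with $C^M=\sum_kc_k^M$, and let $\mathcal{F}_c=\{c\in\mathbb{R}^N: c\ge 0,\ \sum_{i=1}^Nc_i\le C^M\}$. For each round $t=1,\dots,T$ let (possibly adversarially chosen) data $r_1(t)<\dots<r_K(t)$ with $0\le r_k(t)\le r_{\max}$, prices $0\le p_i(t)<p_{\max}$, and deployment ratios $\epsilon(t)\in[0,1]^N$ be given, and define for $c\in\mathcal{F}_c$ $$\mathrm{cost}_t(c)=\sum_{k<k_c}(r_k(t)-r_{k_c}(t))c_k^M+\sum_{i=1}^Nc_i\big(r_{k_c}(t)\epsilon_i(t)-p_i(t)\big),$$ where $k_c=\min\{q:\sum_i\epsilon_i(t)c_i\le\sum_{k=1}^qc_k^M\}$. Let $D=C^M$ if $N=1$ and $D=\sqrt2\,C^M$ if $N\ge2$, and $G=\sqrt N\max\{r_{\max},p_{\max}\}$. Run online projected subgradient descent: $c(1)\in\mathcal{F}_c$ arbitrary and $c(t+1)=\mathrm{proj}_{\mathcal{F}_c}\big(c(t)-\eta_t g_t\big)$ with $g_t=\big(r_{k_c}(t)\epsilon_i(t)-p_i(t)\big)_{i=1}^N$ (the critical type $k_c$ evaluated at $c(t)$), $\eta_t=\frac{D}{G\sqrt t}$, where $\mathrm{proj}_{\mathcal{F}_c}$ is Euclidean projection and $c(t)$ is chosen before round-$t$ data are revealed. Then the regret $$R_T=\sum_{t=1}^T\mathrm{cost}_t(c(t))-\min_{c\in\mathcal{F}_c}\sum_{t=1}^T\mathrm{cost}_t(c)$$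 satisfies $R_T\le\frac32GD\sqrt T\le 3C^M\sqrt{\frac{TN}{2}}\max\{r_{\max},p_{\max}\}$.
   Context: Interpretation: a cryptominer with $K$ machine types (capacities $c_k^M$, per-unit net mining rewards $r_k(t)$) chooses each round capacities $c_i(t)$ committed to $N$ ancillary service programs with prices $p_i(t)$ and deployment ratios $\epsilon_i(t)$; $\mathrm{cost}_t$ is its optimal net cost in round $t$, and $g_t$ is a subgradient of $\mathrm{cost}_t$ at $c(t)$. *)

(* Defs.v *)
From mathcomp Require Import all_boot all_order all_algebra.
From mathcomp Require Import reals.
Set Implicit Arguments. Unset Strict Implicit. Unset Printing Implicit Defensive.
Import Order.TTheory GRing.Theory Num.Theory.
Local Open Scope ring_scope.

Section Defs.
Variable R : realType.

(* Machine types are indexed 0..K-1 (paper: 1..K); cM k = c^M_{k+1}. *)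
Definition CMtot (K : nat) (cM : nat -> R) : R := \sum_(k < K) cM k.

Definition Fc (N K : nat) (cM : nat -> R) (c : 'I_N -> R) : Prop :=
  (forall i, 0 <= c i) /\ \sum_(i < N) c i <= CMtot K cM.

(* Critical type (0-indexed): the least q in {0..K-1} with
   sum_i eps_i c_i <= sum_{k <= q} cM k, i.e. paper's k_c - 1. *)
Definition kcrit (N K : nat) (cM : nat -> R) (eps : 'I_N -> R) (c : 'I_N -> R)
  : nat :=
  find (fun q => \sum_(i < N) eps i * c i <= \sum_(k < q.+1) cM k) (iota 0 K).

Definition cost (N K : nat) (cM : nat -> R) (r : nat -> R)
  (eps p : 'I_N -> R) (c : 'I_N -> R) : R :=
  let kc := kcrit K cM eps c in
  \sum_(k < K | (k < kc)%N) (r k - r kc) * cM k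
  + \sum_(i < N) c i * (r kc * eps i - p i).

Definition subgrad (N K : nat) (cM : nat -> R) (r : nat -> R)
  (eps p : 'I_N -> R) (c : 'I_N -> R) : 'I_N -> R :=
  fun i => r (kcrit K cM eps c) * eps i - p i.

Definition sqnorm (N : nat) (x : 'I_N -> R) : R := \sum_(i < N) x i ^+ 2.

Definition is_proj (N : nat) (F : ('I_N -> R) -> Prop) (x y : 'I_N -> R) : Prop :=
  F y /\ forall z, F z ->
    sqnorm (fun i => x i - y i) <= sqnorm (fun i => x i - z i).

Definition Dconst (N K : nat) (cM : nat -> R) : R :=
  if N == 1%N then CMtot K cM else Num.sqrt 2 * CMtot K cM.

Definition Gconst (N : nat) (rmax pmax : R) : R :=
  Num.sqrt (N%:R) * Num.max rmax pmax.

Definition eta (N K : nat) (cM : nat -> R) (rmax pmax : R) (t : nat) : R :=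
  Dconst N K cM / (Gconst N rmax pmax * Num.sqrt (t%:R)).

End Defs.

(* Main.v *)
Require Import Defs.
From mathcomp Require Import all_boot all_order all_algebra.
From mathcomp Require Import reals.
From mathcomp Require Import ring lra zify.
Import Order.TTheory GRing.Theory Num.Theory.
Local Open Scope ring_scope.

Module Helpers.
Set Implicit Arguments. Unset Strict Implicit. Unset Printing Implicit Defensive.
Section Vec.
Variable R : realType.
Variable N : nat.
Implicit Types x y z a b h : 'I_N -> R.

Definition dot a b : R := \sum_(i < N) a i * b i.

Lemma sqnorm_ge0 a : 0 <= sqnorm a.
Proof. by apply: sumr_ge0 => i _; rewrite sqr_ge0. Qed.

Lemma sqnormE a b h (l : R) : (forall i, h i = a i - l * b i) ->
  sqnorm h = sqnorm a - 2 * l * dot b a + l ^+ 2 * sqnorm b.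
Proof.
move=> hh; rewrite /sqnorm /dot !mulr_sumr -sumrB -big_split /=.
by apply: eq_bigr => i _; rewrite hh; ring.
Qed.

Lemma Fc_convex K cM y z (l : R) : Fc K cM y -> Fc K cM z -> 0 <= l <= 1 ->
  Fc K cM (fun i => y i + l * (z i - y i)).
Proof.
move=> [y0 ys] [z0 zs] /andP[l0 l1]; split.
  move=> i; have := y0 i; have := z0 i => a b.
  have : 0 <= l * z i by rewrite mulr_ge0.
  have : 0 <= (1 - l) * y i by rewrite mulr_ge0 // subr_ge0.
  lra.
rewrite big_split /= -mulr_sumr sumrB.
set Y := \sum_i y i in ys *; set Z := \sum_i z i in zs *.
have : 0 <= l * (CMtot K cM - Z) by rewrite mulr_ge0 // subr_ge0.
have : 0 <= (1 - l) * (CMtot K cM - Y) by rewrite mulr_ge0 // subr_ge0.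
lra.
Qed.

Lemma proj_nonexp K cM x y z : is_proj (Fc K cM) x y -> Fc K cM z ->
  sqnorm (fun i => y i - z i) <= sqnorm (fun i => x i - z i).
Proof.
move=> [Fy ymin] Fz.
set v := fun i => z i - y i; set w := fun i => x i - y i.
have key : forall l : R, 0 <= l <= 1 ->
    sqnorm w <= sqnorm w - 2 * l * dot v w + l ^+ 2 * sqnorm v.
  move=> l hl; rewrite -(@sqnormE w v (fun i => x i - (y i + l * (z i - y i))) l).
    exact: ymin (Fc_convex Fy Fz hl).
  by move=> i; rewrite /w /v; ring.
have dv : dot v w <= 0.
  rewrite leNgt; apply/negP => dpos.
  have nv := sqnorm_ge0 v.
  set d := dot v w in dpos key; set n := sqnorm v in nv key.
  have dn : 0 < d + n by lra.
  have := key (d / (d + n)).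
  have l0 : 0 <= d / (d + n) by rewrite divr_ge0 // ltW.
  have l1 : d / (d + n) <= 1 by rewrite ler_pdivrMr // mul1r; lra.
  rewrite l0 l1 => /(_ isT).
  have -> : sqnorm w - 2 * (d / (d + n)) * d + (d / (d + n)) ^+ 2 * n
    = sqnorm w - (d / (d + n)) ^+ 2 * (2 * d + n).
    by field; rewrite gt_eqF.
  have : 0 < (d / (d + n)) ^+ 2 * (2 * d + n).
    by rewrite mulr_gt0 // ?exprn_gt0 ?divr_gt0 //; lra.
  lra.
have -> : sqnorm (fun i => x i - z i) = sqnorm w - 2 * 1 * dot v w + 1 ^+ 2 * sqnorm v.
  by apply: sqnormE => i; rewrite /w /v; ring.
have -> : sqnorm (fun i => y i - z i) = sqnorm v.
  by apply: eq_bigr => i _; rewrite /v; ring.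
have := sqnorm_ge0 w; lra.
Qed.

End Vec.

Section Diam.
Variable R : realType.

Lemma le_sum_nonneg (N : nat) (x : 'I_N -> R) i : (forall j, 0 <= x j) -> x i <= \sum_j x j.
Proof.
move=> x0; rewrite (bigD1 i) //= lerDl; by apply: sumr_ge0.
Qed.

Lemma sq_sum_le (N : nat) (x : 'I_N -> R) : (forall j, 0 <= x j) ->
  \sum_i x i ^+ 2 <= (\sum_i x i) ^+ 2.
Proof.
move=> x0; rewrite expr2 mulr_suml; apply: ler_sum => i _.
by rewrite expr2 ler_wpM2l // le_sum_nonneg.
Qed.

Lemma diam_Fc (N K : nat) cM (x y : 'I_N -> R) : (0 < N)%N ->
  Fc K cM x -> Fc K cM y -> sqnorm (fun i => x i - y i) <= Dconst N K cM ^+ 2.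
Proof.
move=> hN [x0 xs] [y0 ys]; rewrite /Dconst.
have sx0 : 0 <= \sum_i x i by apply: sumr_ge0.
have sy0 : 0 <= \sum_i y i by apply: sumr_ge0.
case: eqP => [eN|_].
  subst N; rewrite /sqnorm big_ord1; rewrite !big_ord1 in xs sx0 ys sy0.
  have := x0 ord0; have := y0 ord0; nra.
rewrite exprMn sqr_sqrtr // .
apply: (le_trans (y := \sum_i x i ^+ 2 + \sum_i y i ^+ 2)).
  rewrite -big_split; apply: ler_sum => i _ /=.
  have := x0 i; have := y0 i; nra.
have := sq_sum_le x0; have := sq_sum_le y0; nra.
Qed.

End Diam.

Section Sub.
Variable R : realType.
Variables (K : nat) (cM : nat -> R) (r : nat -> R).
Hypothesis hK : (0 < K)%N.
Hypothesis hcM : forall k, (k < K)%N -> 0 < cM k.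
Hypothesis hr : forall k, (k.+1 < K)%N -> r k < r k.+1.

Definition S q := \sum_(k < q) cM k.
Definition psi q (s : R) := \sum_(k < K | (k < q)%N) (r k - r q) * cM k + r q * s.

Lemma sum_lt (F : nat -> R) q : (q <= K)%N ->
  \sum_(k < K | (k < q)%N) F k = \sum_(k < q) F k.
Proof. by move=> hq; rewrite (@big_ord_widen_cond _ _ _ q K (fun _ => true) F hq). Qed.

Lemma psiE q s : (q <= K)%N ->
  psi q s = \sum_(k < q) r k * cM k - r q * S q + r q * s.
Proof.
move=> hq; rewrite /psi (sum_lt (fun k => (r k - r q) * cM k)) // /S mulr_sumr -sumrB.
by congr (_ + _); apply: eq_bigr => i _; ring.
Qed.

Lemma psi_step q s : (q.+1 < K)%N ->
  psi q.+1 s - psi q s = (r q.+1 - r q) * (s - S q.+1).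
Proof.
move=> hq; rewrite !psiE; try lia.
rewrite /S !big_ord_recr /=; ring.
Qed.

Lemma psi_max s b : (b < K)%N -> s <= S b.+1 ->
  (forall q, (q < b)%N -> S q.+1 < s) ->
  forall a, (a < K)%N -> psi a s <= psi b s.
Proof.
move=> hb hs hlt a ha.
case: (leqP a b) => hab.
  have up : forall n, (n <= b)%N -> psi (b - n) s <= psi b s.
    elim=> [|n IH] hn; first by rewrite subn0.
    apply: le_trans (IH (ltnW hn)).
    set q := (b - n.+1)%N.
    have e : (b - n)%N = q.+1 by rewrite /q; lia.
    rewrite e.
    have st := psi_step s (q:=q) ltac:(rewrite /q; lia).
    have h3 : S q.+1 < s by apply: hlt; rewrite /q; lia.
    have h4 : r q < r q.+1 by apply: hr; rewrite /q; lia.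
    nra.
  have := up (b - a)%N (leq_subr _ _); rewrite subKn //.
have down : forall n, (b + n < K)%N -> psi (b + n) s <= psi b s /\ s <= S (b + n).+1.
  elim=> [|n IH] hn; first by rewrite addn0.
  have [IH1 IH2] := IH ltac:(lia).
  set q := (b + n)%N in IH1 IH2.
  have e : (b + n.+1)%N = q.+1 by rewrite /q; lia.
  rewrite e; split.
    apply: le_trans IH1.
    have st := psi_step s (q:=q) ltac:(rewrite /q; lia).
    have h4 : r q < r q.+1 by apply: hr; rewrite /q; lia.
    nra.
  rewrite /S big_ord_recr /= -/(S q.+1).
  have := hcM (k := q.+1) ltac:(rewrite /q; lia); lra.
have := down (a - b)%N; rewrite subnKC ?(ltnW hab) // => /(_ ha) [] //.
Qed.


Lemma kcrit_spec N (eps c : 'I_N -> R) :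
  \sum_i eps i * c i <= S K ->
  [/\ (kcrit K cM eps c < K)%N, \sum_i eps i * c i <= S (kcrit K cM eps c).+1
     & forall q, (q < kcrit K cM eps c)%N -> S q.+1 < \sum_i eps i * c i].
Proof.
move=> hs; rewrite /kcrit.
set P := (fun q => \sum_(i < N) eps i * c i <= \sum_(k < q.+1) cM k).
have hasP : has P (iota 0 K).
  apply/hasP; exists K.-1; first by rewrite mem_iota; lia.
  by rewrite /P prednK.
have bK : (find P (iota 0 K) < K)%N by rewrite -{2}(size_iota 0 K) -has_find.
split=> //.
  by have := nth_find 0%N hasP; rewrite nth_iota.
move=> q hq; have := before_find 0%N hq; rewrite nth_iota; last by lia.
by rewrite /P add0n => /negbT; rewrite -ltNge.
Qed.

Lemma subgrad_ineq N (eps p c c' : 'I_N -> R) :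
  \sum_i eps i * c i <= S K -> \sum_i eps i * c' i <= S K ->
  cost K cM r eps p c - cost K cM r eps p c' <=
  \sum_i subgrad K cM r eps p c i * (c i - c' i).
Proof.
move=> hs hs'.
have [aK _ _] := kcrit_spec hs.
have [bK hb1 hb2] := kcrit_spec hs'.
have := psi_max bK hb1 hb2 aK.
rewrite /cost /subgrad /psi.
set a := kcrit K cM eps c; set b := kcrit K cM eps c'.
set s' := \sum_i eps i * c' i.
set A := \sum_(k < K | (k < a)%N) _; set B := \sum_(k < K | (k < b)%N) _.
move=> H.
have E : \sum_i c i * (r a * eps i - p i) - \sum_i c' i * (r b * eps i - p i)
   - \sum_i (r a * eps i - p i) * (c i - c' i) = (r a - r b) * s'.
  rewrite /s' mulr_sumr -!sumrB; apply: eq_bigr => i _; ring.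
lra.
Qed.

End Sub.

Section Sums.
Variable R : realType.

Lemma sum_inv_sqrt n : \sum_(1 <= t < n.+1) (Num.sqrt (t%:R : R))^-1 <= 2 * Num.sqrt n%:R.
Proof.
elim: n => [|n IH]; first by rewrite big_geq // sqrtr0 mulr0.
rewrite big_nat_recr //=.
set a := Num.sqrt (n%:R : R) in IH *; set b := Num.sqrt (n.+1%:R : R).
have a0 : 0 <= a by apply: sqrtr_ge0.
have b0 : 0 < b by rewrite sqrtr_gt0 ltr0n.
have a2 : a ^+ 2 = n%:R by rewrite sqr_sqrtr // ler0n.
have b2 : b ^+ 2 = n%:R + 1 by rewrite sqr_sqrtr // ?ler0n // -natr1.
set y := b^-1.
have yb : b * y = 1 by rewrite mulfV // gt_eqF.
have y0 : 0 < y by rewrite invr_gt0.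
have : 0 <= y * (a - b) ^+ 2 by rewrite mulr_ge0 // ?sqr_ge0 // ltW.
nra.
Qed.

Lemma tele (a d : nat -> R) (D2 : R) n :
  (forall t, 0 <= a t) -> (forall t, a t <= a t.+1) ->
  (forall t, (1 <= t <= n.+1)%N -> d t <= D2) ->
  \sum_(1 <= t < n.+2) a t * (d t - d t.+1) <= a n.+1 * (D2 - d n.+2).
Proof.
move=> a0 amon; elim: n => [|n IH] hd.
  rewrite big_nat1; have := hd 1%N isT; have := a0 1%N; nra.
rewrite big_nat_recr //=.
have := IH (fun t ht => hd t ltac:(lia)).
have := hd n.+2 ltac:(lia).
have := amon n.+1; have := a0 n.+1.
set x := a n.+1; set y := a n.+2; set z := d n.+2.
move=> x0 xy zD IH'.
have : 0 <= (y - x) * (D2 - z) by rewrite mulr_ge0 // subr_ge0.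
nra.
Qed.

End Sums.

End Helpers.
Import Helpers.

Lemma Fc_s (R : realType) N K (cM : nat -> R) (eps c : 'I_N -> R) :
  Fc K cM c -> (forall i, 0 <= eps i <= 1) -> \sum_i eps i * c i <= S cM K.
Proof.
move=> [c0 cs] he; apply: le_trans cs; apply: ler_sum => i _.
have := c0 i; have := he i => /andP[]; nra.
Qed.

Theorem theorem5 (R : realType) (K N T : nat) (cM : nat -> R) (rmax pmax : R)
  (r : nat -> nat -> R) (p eps : nat -> 'I_N -> R) (c : nat -> 'I_N -> R) :
  (0 < K)%N -> (0 < N)%N -> (0 < T)%N ->
  (forall k, (k < K)%N -> 0 < cM k) ->
  (forall t k, (1 <= t <= T)%N -> (k.+1 < K)%N -> r t k < r t k.+1) ->
  (forall t k, (1 <= t <= T)%N -> (k < K)%N -> 0 <= r t k <= rmax) ->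
  (forall t i, (1 <= t <= T)%N -> 0 <= p t i < pmax) ->
  (forall t i, (1 <= t <= T)%N -> 0 <= eps t i <= 1) ->
  Fc K cM (c 1%N) ->
  (forall t, (1 <= t < T)%N ->
     is_proj (Fc K cM)
       (fun i => c t i - eta N K cM rmax pmax t * subgrad K cM (r t) (eps t) (p t) (c t) i)
       (c t.+1)) ->
  (forall c' : 'I_N -> R, Fc K cM c' ->
     \sum_(1 <= t < T.+1) cost K cM (r t) (eps t) (p t) (c t)
     - \sum_(1 <= t < T.+1) cost K cM (r t) (eps t) (p t) c'
     <= 3 / 2 * Gconst N rmax pmax * Dconst N K cM * Num.sqrt (T%:R))
  /\ 3 / 2 * Gconst N rmax pmax * Dconst N K cM * Num.sqrt (T%:R)
     <= 3 * CMtot K cM * Num.sqrt (T%:R * N%:R / 2) * Num.max rmax pmax.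
Proof.
move=> hK hN hT hcM hr hrb hpb heb Fc1 hproj.
set M := Num.max rmax pmax.
set G := Gconst N rmax pmax; set D := Dconst N K cM; set CM := CMtot K cM.
pose i0 : 'I_N := Ordinal hN.
have hT1 : (1 <= 1 <= T)%N by lia.
have hM : 0 < M.
  have := hpb 1%N i0 hT1 => /andP[h1 h2].
  have : pmax <= M by rewrite /M le_max lexx orbT.
  lra.
have rM : rmax <= M by rewrite /M le_max lexx.
have pM : pmax <= M by rewrite /M le_max lexx orbT.
have hCM : 0 < CM.
  rewrite /CM /CMtot (bigD1 (Ordinal hK)) //=.
  have := hcM 0%N hK.
  have : 0 <= \sum_(i < K | i != Ordinal hK) cM i.
    by apply: sumr_ge0 => i _; apply: ltW; apply: hcM.
  lra.
have hD : 0 < D.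
  rewrite /D /Dconst; case: ifP => // _; rewrite mulr_gt0 // sqrtr_gt0 //.
have hG : 0 < G by rewrite /G /Gconst mulr_gt0 // sqrtr_gt0 ltr0n.
have G2 : G ^+ 2 = N%:R * M ^+ 2 by rewrite /G /Gconst exprMn sqr_sqrtr // ler0n.
have hF : forall t, (1 <= t <= T)%N -> Fc K cM (c t).
  elim=> [|t IH] ht; first by lia.
  case: (posnP t) => [->|tpos] //.
  exact: (hproj t ltac:(lia)).1.
have hsK : forall t (x : 'I_N -> R), (1 <= t <= T)%N -> Fc K cM x ->
    \sum_i eps t i * x i <= S cM K.
  by move=> t x ht hx; apply: Fc_s hx _ => i; apply: heb.
have hg : forall t, (1 <= t <= T)%N ->
    sqnorm (subgrad K cM (r t) (eps t) (p t) (c t)) <= G ^+ 2.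
  move=> t ht; rewrite G2 /sqnorm.
  have [kK _ _] := kcrit_spec hK (hsK t _ ht (hF t ht)).
  apply: (le_trans (y := \sum_(i < N) M ^+ 2)); last by rewrite sumr_const card_ord mulr_natl.
  apply: ler_sum => i _; rewrite /subgrad.
  have := hrb t _ ht kK; have := heb t i ht; have := hpb t i ht.
  set rr := r t _; move=> /andP[p0 p1] /andP[e0 e1] /andP[r0 r1].
  have : rr * eps t i <= M by nra.
  have : 0 <= rr * eps t i by nra.
  nra.
split; last first.
  have sT0 : 0 <= Num.sqrt (T%:R : R) by apply: sqrtr_ge0.
  have -> : (T%:R * N%:R / 2 : R) = T%:R * (N%:R / 2) by rewrite mulrA.
  rewrite sqrtrM ?ler0n //.
  have MC0 : 0 <= M * CM * Num.sqrt (T%:R : R) by rewrite !mulr_ge0 // ltW.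
  rewrite /G /D /Gconst /Dconst -/M -/CM; case: eqP => eN.
    rewrite eN sqrtr1.
    set y := Num.sqrt (1%:R / 2 : R).
    have y0 : 0 <= y by apply: sqrtr_ge0.
    have y2 : y ^+ 2 = 1 / 2 by rewrite sqr_sqrtr // divr_ge0.
    have yh : 1 / 2 <= y by nra.
    have : 0 <= (M * CM * Num.sqrt (T%:R : R)) * (3 * y - 3 / 2) by rewrite mulr_ge0 //; lra.
    nra.
  set z := Num.sqrt (N%:R / 2 : R); set w := Num.sqrt (2 : R).
  have hzw : Num.sqrt (N%:R : R) = z * w.
    rewrite /z /w -sqrtrM; last by rewrite divr_ge0 ?ler0n.
    by rewrite divfK // pnatr_eq0.
  have w2 : w * w = 2 by rewrite -expr2 sqr_sqrtr.
  rewrite hzw.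
  have -> : 3 / 2 * (z * w * M) * (w * CM) * Num.sqrt (T%:R : R)
    = 3 / 2 * (w * w) * (z * M * CM * Num.sqrt (T%:R : R)) by ring.
  rewrite w2.
  have -> : 3 * CM * (Num.sqrt (T%:R : R) * z) * M = 3 * (z * M * CM * Num.sqrt (T%:R : R)) by ring.
  lra.
move=> u Fu.
pose d t := sqnorm (fun i => c t i - u i).
pose e t := if (t <= T)%N then d t else 0.
pose a t := G * Num.sqrt (t%:R : R) / (2 * D).
have round : forall t, (1 <= t <= T)%N ->
    cost K cM (r t) (eps t) (p t) (c t) - cost K cM (r t) (eps t) (p t) u
    <= a t * (e t - e t.+1) + D * G / 2 * (Num.sqrt (t%:R : R))^-1.
  move=> t ht.
  set g := subgrad K cM (r t) (eps t) (p t) (c t).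
  set et := eta N K cM rmax pmax t.
  have H1 := subgrad_ineq hK hcM (fun k => hr t k ht) (p t) (hsK t _ ht (hF t ht)) (hsK t _ ht Fu).
  have H3 := @sqnormE R N (fun i => c t i - u i) g (fun i => c t i - et * g i - u i) et
     ltac:(move=> i /=; ring).
  have H2 : e t.+1 <= sqnorm (fun i => c t i - et * g i - u i).
    rewrite /e; case: ifP => htT.
      exact: (proj_nonexp (hproj t ltac:(lia)) Fu).
    exact: sqnorm_ge0.
  have H4 := hg t ht.
  have et_def : et = D / (G * Num.sqrt (t%:R : R)) by [].
  have st0 : 0 < Num.sqrt (t%:R : R) by rewrite sqrtr_gt0 ltr0n; lia.
  have et0 : 0 < et by rewrite et_def divr_gt0 // mulr_gt0.
  have a0 : 0 < a t by rewrite /a; apply: divr_gt0; apply: mulr_gt0.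
  have eta_a : et * a t = 1 / 2 by rewrite et_def /a; field; rewrite !gt_eqF.
  have etG : et * G ^+ 2 = D * G * (Num.sqrt (t%:R : R))^-1.
    by rewrite et_def; field; rewrite !gt_eqF.
  have ed : e t = d t by rewrite /e; case: ifP => //; lia.
  rewrite ed.
  rewrite H3 in H2.
  set X := dot g _ in H2.
  have HX : X <= a t * (d t - e t.+1) + et / 2 * sqnorm g.
    have M2 := ler_wpM2l (ltW a0) H2.
    have E : a t * (sqnorm (fun i => c t i - u i) - 2 * et * X + et ^+ 2 * sqnorm g)
       = a t * d t - (2 * (et * a t)) * X + (et * a t) * et * sqnorm g by rewrite /d; ring.
    rewrite E eta_a in M2.
    rewrite mulrBr; lra.
  have : et / 2 * sqnorm g <= et / 2 * G ^+ 2 by rewrite ler_wpM2l // divr_ge0 // ltW.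
  have : et / 2 * G ^+ 2 = D * G / 2 * (Num.sqrt (t%:R : R))^-1 by rewrite mulrAC etG mulrAC.
  have : cost K cM (r t) (eps t) (p t) (c t) - cost K cM (r t) (eps t) (p t) u <= X by [].
  lra.
rewrite -sumrB.
have S1 := ler_sum_nat (fun t (ht : (1 <= t < T.+1)%N) => round t ht).
apply: (le_trans S1); rewrite big_split /= -mulr_sumr.
have a0 : forall t, 0 <= a t.
  move=> t; rewrite /a; apply: divr_ge0; last by lra.
  by apply: mulr_ge0; [lra | apply: sqrtr_ge0].
have amon : forall t, a t <= a t.+1.
  move=> t; rewrite /a; apply: ler_wpM2r; first by rewrite invr_ge0; lra.
  apply: ler_wpM2l; first by lra.
  by rewrite ler_sqrt ?ler0n // ler_nat.
have hd : forall t, (1 <= t <= T.-1.+1)%N -> e t <= D ^+ 2.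
  move=> t; rewrite prednK // => ht; rewrite /e; case/andP: (ht) => _ ->; exact: diam_Fc hN (hF t ht) Fu.
have TL := tele a0 amon hd; rewrite prednK // in TL.
have e0 : e T.+1 = 0 by rewrite /e ltnn.
rewrite e0 subr0 in TL.
have SQ := sum_inv_sqrt R T.
have aT : a T * D ^+ 2 = G * D * Num.sqrt (T%:R : R) / 2 by rewrite /a; field; rewrite gt_eqF.
have : D * G / 2 * \sum_(1 <= i < T.+1) (Num.sqrt (i%:R : R))^-1
   <= D * G / 2 * (2 * Num.sqrt (T%:R : R)).
  apply: ler_wpM2l => //; apply: divr_ge0; [apply: mulr_ge0; lra | lra].
have : D * G / 2 * (2 * Num.sqrt (T%:R : R)) = G * D * Num.sqrt (T%:R : R) by field.
lra.
Qed.
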